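(* For $n\ge1$ let $\overline{P}_n$ be the group presented by \[ P_{n}=\Big\langle\, x_{\eta}\ \big(\eta \in \textstyle\bigcup_{i=0}^{n-1} \{0,1\}^{i}\big)\ \Big|\ x_{\eta}^{3}=e\ \ \forall \eta \in \{0,1\}^{n-1},\quad x_{\eta 0}x_{\eta 1}=x_{\eta}^{3}\ \ \forall \eta \in \textstyle\bigcup_{i=0}^{n-2} \{0,1\}^{i}\,\Big\rangle, \] and let $G=\overline{P}_1*\overline{P}_2*\overline{P}_3*\cdots$ be the free product of all of them. Then $G/\mathrm{Tor}_1(G)\cong G$, and consequently $\mathrm{TorLen}(G)=\infty$.
   Context: $\{0,1\}^i$ denotes the set of binary strings of length exactly $i$, with $\{0,1\}^0=\{\emptyset\}$; $\eta0,\eta1$ denote strings obtained by appending a digit on the right. For a group $G$, define $\mathrm{Tor}_0(G)=\{e\}$ and inductively $\mathrm{Tor}_{i+1}(G)$ to be the normal closure in $G$ of $\{g\in G : g\,\mathrm{Tor}_i(G)\text{ has finite order in } G/\mathrm{Tor}_i(G)\}$; set $\mathrm{Tor}_\infty(G)=\bigcup_{i}\mathrm{Tor}_i(G)$. The torsion length $\mathrm{TorLen}(G)$ is the smallest $n\ge 0$ with $\mathrm{Tor}_n(G)=\mathrm{Tor}_\infty(G)$, and $\infty$ if no such $n$ exists. *)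

(* Defs.v *)
From mathcomp Require Import all_boot.
Set Implicit Arguments. Unset Strict Implicit. Unset Printing Implicit Defensive.

Record Grp := {
  carrier :> Type;
  gmul : carrier -> carrier -> carrier;
  ginv : carrier -> carrier;
  gone : carrier;
  gmulA : forall x y z, gmul x (gmul y z) = gmul (gmul x y) z;
  gmul1l : forall x, gmul gone x = x;
  gmul1r : forall x, gmul x gone = x;
  gmulVl : forall x, gmul (ginv x) x = gone;
  gmulVr : forall x, gmul x (ginv x) = gone
}.

Arguments gmul {g}. Arguments ginv {g}. Arguments gone {g}.

Definition gpow (G : Grp) (x : G) (k : nat) : G := iter k (gmul x) gone.

Definition is_hom (G H : Grp) (f : G -> H) : Prop :=
  forall x y, f (gmul x y) = gmul (f x) (f y).

Definition normal_subgroup (G : Grp) (N : G -> Prop) : Prop :=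
  [/\ N gone,
      (forall x y, N x -> N y -> N (gmul x y)),
      (forall x, N x -> N (ginv x)) &
      (forall x g, N x -> N (gmul (ginv g) (gmul x g)))].

Definition normal_closure (G : Grp) (S : G -> Prop) : G -> Prop :=
  fun x => forall N : G -> Prop, normal_subgroup N ->
             (forall s, S s -> N s) -> N x.

(* Tor_0 = {e}; Tor_{i+1} = normal closure of {g | g Tor_i has finite order
   in G / Tor_i}, i.e. of {g | exists k >= 1, g^k \in Tor_i}. *)
Fixpoint Tor {G : Grp} (i : nat) : G -> Prop :=
  match i with
  | 0 => fun x => x = gone
  | i'.+1 => normal_closure (fun g : G => exists k, 0 < k /\ Tor i' (gpow g k))
  end.

Definition Tor_inf (G : Grp) : G -> Prop := fun x => exists i, @Tor G i x.

Definition TorLen_infinite (G : Grp) : Prop :=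
  forall n : nat, ~ (forall x : G, @Tor G n x <-> @Tor_inf G x).

(* Generators of G = free product of the P_n (n >= 1): x_{n,eta} with
   0 < n and size eta <= n - 1.  A family x : nat -> seq bool -> H is
   only looked at on valid indices.  eta0, eta1 = rcons eta false/true. *)
Definition valid_index (n : nat) (eta : seq bool) : Prop := 0 < n /\ size eta < n.

Definition satisfies_rels (H : Grp) (x : nat -> seq bool -> H) : Prop :=
  (forall n eta, 0 < n -> size eta = n.-1 -> gpow (x n eta) 3 = gone) /\
  (forall n eta, size eta + 2 <= n ->
     gmul (x n (rcons eta false)) (x n (rcons eta true)) = gpow (x n eta) 3).

(* (G, g) is the group presented by these generators and relations, i.e.
   the free product of all the presented groups P_n-bar (universal property). *)
Definition is_free_product_of_Pbar (G : Grp) (g : nat -> seq bool -> G) : Prop :=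
  satisfies_rels g /\
  forall (H : Grp) (h : nat -> seq bool -> H), satisfies_rels h ->
    (exists f : G -> H, is_hom f /\ forall n eta, valid_index n eta -> f (g n eta) = h n eta) /\
    (forall f1 f2 : G -> H, is_hom f1 -> is_hom f2 ->
       (forall n eta, valid_index n eta -> f1 (g n eta) = h n eta) ->
       (forall n eta, valid_index n eta -> f2 (g n eta) = h n eta) ->
       forall y, f1 y = f2 y).

(* G / N is isomorphic to H  iff  there is a surjective hom G -> H with kernel N
   (first isomorphism theorem, used to avoid quotient types). *)
Definition quotient_iso (G : Grp) (N : G -> Prop) (H : Grp) : Prop :=
  exists f : G -> H, [/\ is_hom f, (forall y, exists x, f x = y) &
                        (forall x, f x = gone <-> N x)].

(* Main.v *)
Require Import Defs.
From mathcomp Require Import all_boot.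
From Stdlib Require Import Classical ClassicalEpsilon FunctionalExtensionality PropExtensionality ProofIrrelevance Lia.
From mathcomp Require Import zify.
Set Implicit Arguments. Unset Strict Implicit. Unset Printing Implicit Defensive.

Section Basic.
Variable G : Grp.
Implicit Types x y z : G.

Lemma mulKg x y : gmul (ginv x) (gmul x y) = y.
Proof. by rewrite gmulA gmulVl gmul1l. Qed.
Lemma mulVKg x y : gmul x (gmul (ginv x) y) = y.
Proof. by rewrite gmulA gmulVr gmul1l. Qed.
Lemma mulgK x y : gmul (gmul y x) (ginv x) = y.
Proof. by rewrite -gmulA gmulVr gmul1r. Qed.
Lemma mulgVK x y : gmul (gmul y (ginv x)) x = y.
Proof. by rewrite -gmulA gmulVl gmul1r. Qed.
Lemma mulg_lcancel x y z : gmul x y = gmul x z -> y = z.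
Proof. by move=> h; rewrite -(mulKg x y) h mulKg. Qed.
Lemma mulg_rcancel x y z : gmul y x = gmul z x -> y = z.
Proof. by move=> h; rewrite -(mulgK x y) h mulgK. Qed.
Lemma inv_uniq x y : gmul x y = gone -> y = ginv x.
Proof. by move=> h; apply: (@mulg_lcancel x); rewrite h gmulVr. Qed.
Lemma invgK x : ginv (ginv x) = x.
Proof. by symmetry; apply: inv_uniq; rewrite gmulVl. Qed.
Lemma invgM x y : ginv (gmul x y) = gmul (ginv y) (ginv x).
Proof. by symmetry; apply: inv_uniq; rewrite -gmulA mulVKg gmulVr. Qed.
Lemma inv1 : ginv (@gone G) = gone.
Proof. by symmetry; apply: inv_uniq; rewrite gmul1l. Qed.
Lemma idem_one x : gmul x x = x -> x = gone.
Proof. by move=> h; apply: (@mulg_lcancel x); rewrite h gmul1r. Qed.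

Lemma gpowS x k : gpow x k.+1 = gmul x (gpow x k).
Proof. by []. Qed.
Lemma gpow0 x : gpow x 0 = gone. Proof. by []. Qed.
Lemma gpowD x a b : gpow x (a + b) = gmul (gpow x a) (gpow x b).
Proof. elim: a => [|a IH]; first by rewrite gmul1l. by rewrite addSn !gpowS IH gmulA. Qed.
Lemma gpowSr x k : gpow x k.+1 = gmul (gpow x k) x.
Proof. by rewrite -addn1 gpowD /gpow /= gmul1r. Qed.
Lemma gpowM x a b : gpow x (a * b) = gpow (gpow x a) b.
Proof. elim: b => [|b IH]; first by rewrite muln0. by rewrite mulnS gpowD IH. Qed.
Lemma gpow1g k : gpow (@gone G) k = gone.
Proof. by elim: k => // k IH; rewrite gpowS IH gmul1l. Qed.
Lemma gpow_conj c y k :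
  gpow (gmul (ginv c) (gmul y c)) k = gmul (ginv c) (gmul (gpow y k) c).
Proof.
elim: k => [|k IH]; first by rewrite gmul1l gmulVl.
by rewrite !gpowS IH !gmulA mulgK -!gmulA.
Qed.
Lemma gpow_inv x k : gpow (ginv x) k = ginv (gpow x k).
Proof.
elim: k => [|k IH]; first by rewrite inv1.
by rewrite gpowS gpowSr invgM IH.
Qed.
Lemma gpow_comm x k : gmul x (gpow x k) = gmul (gpow x k) x.
Proof. by rewrite -gpowS gpowSr. Qed.
End Basic.

Section Hom.
Variables (G H : Grp) (f : G -> H) (hf : is_hom f).
Lemma hom1 : f gone = gone.
Proof. by apply: idem_one; rewrite -hf gmul1l. Qed.
Lemma homV x : f (ginv x) = ginv (f x).
Proof. by apply: inv_uniq; rewrite -hf gmulVr hom1. Qed.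
Lemma homX x k : f (gpow x k) = gpow (f x) k.
Proof. elim: k => [|k IH]; first exact: hom1. by rewrite !gpowS hf IH. Qed.
End Hom.

Lemma hom_comp (G H K : Grp) (f : G -> H) (h : H -> K) :
  is_hom f -> is_hom h -> is_hom (fun x => h (f x)).
Proof. by move=> hf hh x y; rewrite hf hh. Qed.

Inductive cl (G : Grp) (S : G -> Prop) : G -> Prop :=
| cl_gen x : S x -> cl S x
| cl_one : cl S gone
| cl_mul x y : cl S x -> cl S y -> cl S (gmul x y)
| cl_inv x : cl S x -> cl S (ginv x).

Definition subgrp (G : Grp) (S : G -> Prop) :=
  [/\ S gone, (forall x y, S x -> S y -> S (gmul x y)) & (forall x, S x -> S (ginv x))].

Lemma cl_subgrp (G : Grp) (S : G -> Prop) : subgrp (cl S).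
Proof. split; [exact: cl_one | exact: cl_mul | exact: cl_inv]. Qed.

Lemma cl_min (G : Grp) (S T : G -> Prop) : subgrp T -> (forall x, S x -> T x) ->
  forall x, cl S x -> T x.
Proof. move=> [T1 TM TV] ST x; elim => *; auto. Qed.

Lemma cl_mono (G : Grp) (S T : G -> Prop) : (forall x, S x -> T x) ->
  forall x, cl S x -> cl T x.
Proof. move=> ST; apply: cl_min; [exact: cl_subgrp| by move=> x /ST; apply: cl_gen]. Qed.

Lemma subgrp_pow (G : Grp) (S : G -> Prop) x k : subgrp S -> S x -> S (gpow x k).
Proof. move=> [S1 SM SV] Sx; elim: k => //= k IH; exact: SM. Qed.

Lemma agree_cl (G H : Grp) (S T : G -> Prop) (phi psi : G -> H) :
  subgrp T -> (forall x, cl S x -> T x) ->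
  is_hom phi -> (forall x y, T x -> T y -> psi (gmul x y) = gmul (psi x) (psi y)) ->
  (forall x, S x -> phi x = psi x) -> forall x, cl S x -> phi x = psi x.
Proof.
move=> [T1 TM TV] ST hphi hpsi agr.
have psi1 : psi gone = gone by apply: idem_one; rewrite -hpsi // gmul1l.
have psiV x : T x -> psi (ginv x) = ginv (psi x).
  by move=> Tx; apply: inv_uniq; rewrite -hpsi ?gmulVr //; auto.
move=> z; elim=> [x /agr //| |x y cx IHx cy IHy|x cx IH].
- by rewrite (hom1 hphi) psi1.
- by rewrite hphi hpsi ?IHx ?IHy //; apply: ST.
- by rewrite (homV hphi) psiV ?IH //; apply: ST.
Qed.

Lemma hom_kill_cl (G H : Grp) (S : G -> Prop) (phi : G -> H) : is_hom phi ->
  (forall x, S x -> phi x = gone) -> forall x, cl S x -> phi x = gone.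
Proof.
move=> hp hS z; elim=> [x /hS //||x y _ h1 _ h2|x _ h].
- exact: hom1.
- by rewrite hp h1 h2 gmul1l.
- by rewrite (homV hp) h inv1.
Qed.

Section Sym.
Variable X : Type.
Record perm := Perm { pf : X -> X; pg : X -> X;
  pfg : forall x, pf (pg x) = x; pgf : forall x, pg (pf x) = x }.

Lemma perm_ext (p q : perm) : (forall x, pf p x = pf q x) -> p = q.
Proof.
case: p => f1 g1 fg1 gf1; case: q => f2 g2 fg2 gf2 /= h.
have ef : f1 = f2 by apply: functional_extensionality.
subst f2.
have eg : g1 = g2.
  apply: functional_extensionality => x.
  by rewrite -{1}(fg2 x) gf1.
subst g2.
have -> : fg1 = fg2 by apply: proof_irrelevance.
have -> : gf1 = gf2 by apply: proof_irrelevance.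
by [].
Qed.

Definition pmul (p q : perm) : perm.
refine (@Perm (fun x => pf p (pf q x)) (fun x => pg q (pg p x)) _ _).
- by move=> x; rewrite pfg pfg.
- by move=> x; rewrite pgf pgf.
Defined.
Definition pinv (p : perm) : perm := @Perm (pg p) (pf p) (pgf p) (pfg p).
Definition pone : perm := @Perm id id (fun x => erefl) (fun x => erefl).

Definition Sym : Grp.
refine (@Build_Grp perm pmul pinv pone _ _ _ _ _).
- by move=> *; apply: perm_ext.
- by move=> *; apply: perm_ext.
- by move=> *; apply: perm_ext.
- by move=> p; apply: perm_ext => x /=; rewrite pgf.
- by move=> p; apply: perm_ext => x /=; rewrite pfg.
Defined.

Lemma Sym_gpow (p : Sym) k x : pf (gpow p k) x = iter k (pf p) x.
Proof. by elim: k => //= k IH; rewrite IH. Qed.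
End Sym.
Arguments pf {X}.

Inductive Z3 := T0 | T1 | T2.

Section Lift.
Variable X : Type.
Definition lift (p : Sym X) : Sym (X * Z3).
refine (@Perm _ (fun w => (pf p w.1, w.2)) (fun w => (pg p w.1, w.2)) _ _).
- by move=> [x j] /=; rewrite pfg.
- by move=> [x j] /=; rewrite pgf.
Defined.

Lemma lift_hom : is_hom lift.
Proof. by move=> p q; apply: perm_ext => -[x j]. Qed.

Definition croot_f (p : Sym X) (w : X * Z3) : X * Z3 :=
  match w with (x, T0) => (x, T1) | (x, T1) => (x, T2) | (x, T2) => (pf p x, T0) end.
Definition croot_g (p : Sym X) (w : X * Z3) : X * Z3 :=
  match w with (x, T0) => (pg p x, T2) | (x, T1) => (x, T0) | (x, T2) => (x, T1) end.
Definition croot (p : Sym X) : Sym (X * Z3).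
refine (@Perm _ (croot_f p) (croot_g p) _ _).
- by move=> [x []] //=; rewrite pfg.
- by move=> [x []] //=; rewrite pgf.
Defined.

Lemma croot3 p : gpow (croot p) 3 = lift p.
Proof. by apply: perm_ext => -[x []]. Qed.
End Lift.

Section Cayley.
Variable G : Grp.
Definition Lmul (y : G) : Sym G :=
  @Perm G (gmul y) (gmul (ginv y)) (mulVKg y) (mulKg y).
Lemma Lmul_hom : is_hom Lmul.
Proof. by move=> x y; apply: perm_ext => z /=; rewrite gmulA. Qed.
End Cayley.

Section SubGrp.
Variables (G : Grp) (P : G -> Prop) (HP : subgrp P).
Let P1 : P gone. Proof. by case: HP. Qed.
Let PM x y : P x -> P y -> P (gmul x y). Proof. by case: HP => _ h _; apply: h. Qed.
Let PV x : P x -> P (ginv x). Proof. by case: HP => _ _ h; apply: h. Qed.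
Definition SubT := {x : G | P x}.
Lemma sub_ext (a b : SubT) : proj1_sig a = proj1_sig b -> a = b.
Proof.
case: a b => [a pa] [b pb] /= e; subst b.
by rewrite (proof_irrelevance _ pa pb).
Qed.
Definition Sub : Grp.
refine (@Build_Grp SubT
  (fun a b => exist _ (gmul (proj1_sig a) (proj1_sig b)) (PM (proj2_sig a) (proj2_sig b)))
  (fun a => exist _ (ginv (proj1_sig a)) (PV (proj2_sig a)))
  (exist _ gone P1) _ _ _ _ _).
- by move=> *; apply: sub_ext; rewrite /= gmulA.
- by move=> *; apply: sub_ext; rewrite /= gmul1l.
- by move=> *; apply: sub_ext; rewrite /= gmul1r.
- by move=> *; apply: sub_ext; rewrite /= gmulVl.
- by move=> *; apply: sub_ext; rewrite /= gmulVr.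
Defined.
Lemma Sub_val_hom : is_hom (fun a : Sub => proj1_sig a).
Proof. by []. Qed.
End SubGrp.

Definition prodL (G : Grp) (L : seq (bool * G)) : G :=
  foldr (fun p acc => gmul p.2 acc) gone L.

Lemma prodL_cat (G : Grp) (L1 L2 : seq (bool * G)) :
  prodL (L1 ++ L2) = gmul (prodL L1) (prodL L2).
Proof. by elim: L1 => [|p L IH] /=; rewrite ?gmul1l // IH gmulA. Qed.

Lemma prodL_rcons (G : Grp) (L : seq (bool * G)) q :
  prodL (rcons L q) = gmul (prodL L) q.2.
Proof. by rewrite -cats1 prodL_cat /= gmul1r. Qed.

Definition tagne (G : Grp) : rel (bool * G) := fun p q => p.1 != q.1.

Lemma sorted_retag (G : Grp) s (a b : G) L :
  sorted (@tagne G) ((s, a) :: L) -> sorted (@tagne G) ((s, b) :: L).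
Proof. by case: L. Qed.

Lemma sorted_retag' (G : Grp) (p : bool * G) b L :
  sorted (@tagne G) (p :: L) -> sorted (@tagne G) ((p.1, b) :: L).
Proof. by case: L. Qed.

Lemma Forall_cat T (P : T -> Prop) (s1 s2 : seq T) :
  List.Forall P (s1 ++ s2) <-> List.Forall P s1 /\ List.Forall P s2.
Proof.
elim: s1 => [|x s1 IH] /=; first by split=> // -[].
split.
  move/List.Forall_cons_iff => [Px /IH [h1 h2]]; split => //; exact: List.Forall_cons.
move=> [/List.Forall_cons_iff [Px h1] h2]; apply: List.Forall_cons => //; exact/IH.
Qed.

Section Torsion.
Variables (G : Grp) (A B C : G -> Prop).
Hypotheses (HA : subgrp A) (HB : subgrp B) (HC : subgrp C).
Hypotheses (CA : forall x, C x -> A x) (CB : forall x, C x -> B x).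
Definition Af (s : bool) := if s then B else A.

Lemma Af_sub s : subgrp (Af s). Proof. by case: s. Qed.
Lemma CAf s x : C x -> Af s x. Proof. by case: s => /=; auto. Qed.
Lemma AfM s x y : Af s x -> Af s y -> Af s (gmul x y).
Proof. by case: (Af_sub s) => _ h _; apply: h. Qed.
Lemma AfV s x : Af s x -> Af s (ginv x).
Proof. by case: (Af_sub s) => _ _ h; apply: h. Qed.
Lemma CM x y : C x -> C y -> C (gmul x y). Proof. by case: HC => _ h _; apply: h. Qed.
Lemma CV x : C x -> C (ginv x). Proof. by case: HC => _ _ h; apply: h. Qed.
Lemma C1 : C gone. Proof. by case: HC. Qed.

Lemma C_cancel_l x y : C x -> C (gmul x y) -> C y.
Proof. move=> cx cxy; rewrite -(mulKg x y); exact: CM (CV cx) cxy. Qed.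
Lemma C_cancel_r x y : C y -> C (gmul x y) -> C x.
Proof. move=> cy cxy; rewrite -(mulgK y x); exact: CM cxy (CV cy). Qed.

Definition letter (p : bool * G) := Af p.1 p.2 /\ ~ C p.2.
Definition alt (L : seq (bool * G)) := sorted (@tagne G) L /\ List.Forall letter L.

Lemma reduce L : List.Forall (fun p => Af p.1 p.2) L ->
  C (prodL L) \/ exists L', L' <> [::] /\ alt L' /\ prodL L = prodL L'.
Proof.
elim: L => [|[s x] L IH] /=; first by move=> _; left; exact: C1.
move/List.Forall_cons_iff => /= [Ax /IH [Cr|[L' [nL' [[sL' FL'] eL']]]]].
- have Ay : Af s (gmul x (prodL L)) by apply: AfM => //; apply: CAf.
  case: (classic (C (gmul x (prodL L)))) => Cy; first by left.
  right; exists [:: (s, gmul x (prodL L))]; split=> //; split; last by rewrite /= gmul1r.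
  by split => //; constructor.
rewrite eL'.
case: L' nL' sL' FL' eL' => [//|[s' l] L''] _ sL' FL' eL'.
move/List.Forall_cons_iff: FL' => /= [[Al nCl] FL''].
case: (classic (C x)) => Cx.
  right; exists ((s', gmul x l) :: L''); split=> //; split; [split|].
  - by apply: sorted_retag sL'.
  - constructor => //; split => /=; first by apply: AfM => //; apply: CAf.
    by move=> /(C_cancel_l Cx).
  - by rewrite /= gmulA.
case: (eqVneq s' s) => [es|nes].
  subst s'.
  have Ay : Af s (gmul x l) by apply: AfM.
  case: (classic (C (gmul x l))) => Cy.
    case: L'' sL' FL'' {eL'} => [|[s2 l2] L3] sL' FL''.
      by left; rewrite /= gmul1r.
    move/List.Forall_cons_iff: FL'' => /= [[Al2 nCl2] FL3].
    right; exists ((s2, gmul (gmul x l) l2) :: L3); split=> //; split; [split|].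
    - by move: sL' => /= /andP[_ h]; exact: (@sorted_retag G s2 l2 _ L3 h).
    - constructor => //; split => /=; first by apply: AfM => //; apply: CAf.
      by move=> /(C_cancel_l Cy).
    - by rewrite /= !gmulA.
  right; exists ((s, gmul x l) :: L''); split=> //; split; [split|].
  - by apply: sorted_retag sL'.
  - by constructor.
  - by rewrite /= gmulA.
right; exists ((s, x) :: (s', l) :: L''); split=> //; split; [split|] => //.
  by rewrite /= {1}/tagne /= eq_sym nes.
by constructor => //; constructor.
Qed.

Definition powL (L : seq (bool * G)) k := flatten (nseq k L).

Lemma powLS L k : powL L k.+1 = L ++ powL L k. Proof. by []. Qed.

Lemma prodL_pow L k : prodL (powL L k) = gpow (prodL L) k.
Proof. by elim: k => //= k IH; rewrite prodL_cat IH. Qed.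

Hypothesis NF : forall L, L <> [::] -> alt L -> ~ C (prodL L).

Lemma cyc_red_notors p M q : alt (p :: rcons M q) -> q.1 != p.1 ->
  forall k, 0 < k -> gpow (prodL (p :: rcons M q)) k <> gone.
Proof.
move=> [sL FL] ne k k0 e.
have H : forall k, alt (powL (p :: rcons M q) k.+1).
  elim=> [|j [sj Fj]]; first by rewrite /powL /= cats0.
  rewrite powLS; split; last by apply/Forall_cat; split.
  move: sj; rewrite powLS => sj.
  rewrite /= cat_path; apply/andP; split; first exact: sL.
  by rewrite last_rcons /= {1}/tagne ne /=.
case: k k0 e => // k _ e.
apply: (NF _ (H k)); first by [].
rewrite prodL_pow e; exact: C1.
Qed.

Definition conj_fac (h : G) := exists c z, (A z \/ B z) /\ h = gmul (ginv c) (gmul z c).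

Lemma cyc n : forall L, size L <= n -> L <> [::] -> alt L ->
  conj_fac (prodL L) \/ (forall k, 0 < k -> gpow (prodL L) k <> gone).
Proof.
elim: n => [|n IH] [|p L1] //.
case/lastP: L1 => [|M q].
  move=> _ _ [_ /List.Forall_cons_iff [[Ap _] _]]; left.
  exists gone, p.2; split; first by case: (p.1) Ap; auto.
  by rewrite inv1 gmul1l /= !gmul1r.
move=> sz _ aL.
case: (eqVneq q.1 p.1) => [eqp|neq]; last by right; apply: cyc_red_notors.
case: M sz aL => [|m M'] sz aL.
  by move: aL => [/= /andP [] ]; rewrite /tagne eqp eqxx.
move: (aL) => [sL FL].
move: FL; rewrite -cat1s Forall_cat => -[/List.Forall_cons_iff [[Ap nCp] _] FL].
move: FL; rewrite -cats1 Forall_cat => -[FM /List.Forall_cons_iff [[Aq nCq] _]].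
move: (FM) => /List.Forall_cons_iff [[Am nCm] FM'].
rewrite cat1s cats1.
set y := gmul q.2 p.2.
have Ay : Af p.1 y by apply: AfM => //; rewrite -eqp.
have eL : prodL (p :: rcons (m :: M') q) = gmul (ginv q.2) (gmul (gmul y (prodL (m :: M'))) q.2).
  by rewrite /= prodL_rcons /y /= -!gmulA mulKg.
have sM : sorted (@tagne G) (m :: M').
  by move: sL => /= /andP [_]; rewrite rcons_path => /andP [-> _].
have pm : p.1 != m.1 by move: sL => /= /andP [].
have [L' [szL' [nL' [aL' eL']]]] : exists L', size L' <= n /\ L' <> [::] /\ alt L' /\
      prodL L' = gmul y (prodL (m :: M')).
  case: (classic (C y)) => Cy.
    exists ((m.1, gmul y m.2) :: M'); split; first by move: sz; rewrite /= size_rcons; lia.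
    split=> //; split; [split|].
    - exact: sorted_retag' sM.
    - constructor => //; split => /=; first by apply: AfM => //; apply: CAf.
      by move/(C_cancel_l Cy).
    - by rewrite /= gmulA.
  exists ((p.1, y) :: m :: M'); split; first by move: sz; rewrite /= size_rcons; lia.
  split=> //; split; [split|] => //.
    by rewrite /= {1}/tagne pm.
  by constructor.
case: (IH L' szL' nL' aL') => [[c [z [Az ez]]]|nt].
  left; exists (gmul c q.2), z; split => //.
  rewrite eL -eL' ez invgM !gmulA.
  by rewrite -!gmulA.
right => k k0; rewrite eL gpow_conj => e.
apply: (nt k k0); rewrite eL'.
apply: (@mulg_lcancel _ (ginv q.2)); apply: (@mulg_rcancel _ q.2).
by rewrite -gmulA e gmul1r gmulVl.
Qed.

Theorem torsion_conj L : List.Forall (fun p => Af p.1 p.2) L ->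
  forall k, 0 < k -> gpow (prodL L) k = gone -> conj_fac (prodL L).
Proof.
move=> FL k k0 e.
case: (reduce FL) => [Cp|[L' [nL' [aL' eL']]]].
  exists gone, (prodL L); split; first by left; apply: CA.
  by rewrite inv1 gmul1l gmul1r.
rewrite eL' in e *.
case: (cyc (leqnn _) nL' aL') => // nt.
by exfalso; apply: (nt k k0 e).
Qed.
End Torsion.

Lemma sig_ext (T : Type) (P : T -> Prop) (a b : {x : T | P x}) :
  proj1_sig a = proj1_sig b -> a = b.
Proof. case: a b => [a pa] [b pb] /= e; subst b; by rewrite (proof_irrelevance _ pa pb). Qed.

Ltac dem := match goal with |- context [excluded_middle_informative ?P] =>
  let h := fresh "h" in destruct (excluded_middle_informative P) as [h|h]; move: h end.

Section VdW.
Variables (G : Grp) (A B C : G -> Prop).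
Hypotheses (HA : subgrp A) (HB : subgrp B) (HC : subgrp C).
Hypotheses (CA : forall x, C x -> A x) (CB : forall x, C x -> B x).
Local Notation Af := (Af A B).
Let cAf s x : C x -> Af s x. Proof. move=> *; apply: (CAf CA CB s); eauto. Qed.
Let afM s x y : Af s x -> Af s y -> Af s (gmul x y). Proof. move=> *; by apply: (AfM HA HB). Qed.
Let afV s x : Af s x -> Af s (ginv x). Proof. move=> *; by apply: (AfV HA HB). Qed.
Let cM x y : C x -> C y -> C (gmul x y). Proof. move=> *; by apply: (CM HC). Qed.
Let c1 : C gone. Proof. exact: (C1 HC). Qed.
Let ccl x y : C x -> C (gmul x y) -> C y. Proof. move=> h1 h2; exact: (C_cancel_l HC h1 h2). Qed.
Let ccr x y : C y -> C (gmul x y) -> C x. Proof. move=> h1 h2; exact: (C_cancel_r HC h1 h2). Qed.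
Let af1 s : Af s gone. Proof. by case: (Af_sub HA HB s). Qed.

Definition rep (s : bool) (x : G) : G :=
  epsilon (inhabits gone) (fun t => Af s t /\ C (gmul x (ginv t)) /\ (C x -> t = gone)).

Lemma rep_spec s x : Af s x ->
  [/\ Af s (rep s x), C (gmul x (ginv (rep s x))) & (C x -> rep s x = gone)].
Proof.
move=> Ax.
have [h1 [h2 h3]] : Af s (rep s x) /\ C (gmul x (ginv (rep s x))) /\ (C x -> rep s x = gone).
  apply: (epsilon_spec (inhabits (@gone G)) (fun t => Af s t /\ C (gmul x (ginv t)) /\ (C x -> t = gone))).
  case: (classic (C x)) => Cx.
    exists gone; split; first by case: (Af_sub HA HB s).
    by rewrite inv1 gmul1r.
  exists x; split => //; split => //; rewrite gmulVr; exact: c1.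
by split.
Qed.

Lemma rep_C s c x : C c -> rep s (gmul c x) = rep s x.
Proof.
move=> Cc; rewrite /rep; congr epsilon.
apply: functional_extensionality => t; apply: propositional_extensionality.
split.
- move=> [h1 [h2 h3]]; split=> //; split.
    by move: h2; rewrite -gmulA; apply: ccl.
  by move=> Cx; apply: h3; apply: cM.
- move=> [h1 [h2 h3]]; split=> //; split.
    by rewrite -gmulA; apply: cM.
  by move=> Ccx; apply: h3; apply: (ccl Cc).
Qed.

Lemma rep_one_C s x : Af s x -> rep s x = gone -> C x.
Proof. by move=> /rep_spec [_ h _] e; rewrite e inv1 gmul1r in h. Qed.

Lemma rep_idem s x : Af s x -> rep s (rep s x) = rep s x.
Proof.
move=> Ax; case: (rep_spec Ax) => _ h _.
have e : rep s x = rep s (gmul (gmul x (ginv (rep s x))) (rep s x)) by rewrite mulgVK.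
by rewrite {2}e rep_C.
Qed.

Definition State := (G * seq (bool * G))%type.

Definition headval s (c : G) (l : seq (bool * G)) : G :=
  match l with (s', t) :: _ => if s' == s then gmul c t else c | [::] => c end.
Definition tailof s (l : seq (bool * G)) :=
  match l with (s', t) :: l' => if s' == s then l' else l | [::] => [::] end.

Definition mk s (u : G) (tl : seq (bool * G)) : State :=
  (gmul u (ginv (rep s u)),
   if excluded_middle_informative (rep s u = gone) then tl else (s, rep s u) :: tl).

Definition act s (a : G) (st : State) : State :=
  mk s (gmul a (headval s st.1 st.2)) (tailof s st.2).

Definition goodl (p : bool * G) := Af p.1 p.2 /\ rep p.1 p.2 = p.2 /\ p.2 <> gone.
Definition valid (st : State) :=
  [/\ C st.1, sorted (@tagne G) st.2 & List.Forall goodl st.2].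

Definition hd_ne s (l : seq (bool * G)) :=
  match l with p :: _ => p.1 != s | [::] => True end.

Lemma tailof_hd s l : sorted (@tagne G) l -> hd_ne s (tailof s l).
Proof.
case: l => [|[s' t] l] //= sl.
case: (eqVneq s' s) => [es|ne] /=; last by [].
subst s'; case: l sl => //= [[s2 t2] l] /andP [h _].
by move: h; rewrite /tagne /= eq_sym.
Qed.

Lemma tailof_sorted s l : sorted (@tagne G) l -> sorted (@tagne G) (tailof s l).
Proof. case: l => [|[s' t] l] //=; case: ifP => // _; exact: path_sorted. Qed.

Lemma tailof_Forall s l : List.Forall goodl l -> List.Forall goodl (tailof s l).
Proof. case: l => [|[s' t] l] //= F; case: ifP => // _; by case/List.Forall_cons_iff: F. Qed.

Lemma tailof_ne s l : hd_ne s l -> tailof s l = l.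
Proof. by case: l => [|[s' t] l] //= /negbTE ->. Qed.

Lemma headval_ne s c l : hd_ne s l -> headval s c l = c.
Proof. by case: l => [|[s' t] l] //= /negbTE ->. Qed.

Lemma headval_Af s st : valid st -> Af s (headval s st.1 st.2).
Proof.
case: st => c [|[s' t] l] [/= Cc _ F]; first exact: cAf.
case: eqP => [es|_]; last exact: cAf.
subst s'; move/List.Forall_cons_iff: F => [[/= At _] _].
apply: afM => //; exact: cAf.
Qed.

Lemma valid_mk s u tl : Af s u -> sorted (@tagne G) tl -> hd_ne s tl ->
  List.Forall goodl tl -> valid (mk s u tl).
Proof.
move=> Au stl htl Ftl; case: (rep_spec Au) => Ar Cr _.
rewrite /mk; dem => [er|ner]; split => //=.
- move: stl htl; case: tl {Ftl} => //= p tl' -> ; by rewrite /tagne /= eq_sym => ->.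
- constructor => //; split => //; split => //; exact: rep_idem.
Qed.

Lemma valid_act s a st : valid st -> Af s a -> valid (act s a st).
Proof.
move=> vs Aa; case: (vs) => _ sl Fl.
apply: valid_mk.
- apply: afM => //; exact: headval_Af.
- exact: tailof_sorted.
- exact: tailof_hd.
- exact: tailof_Forall.
Qed.

Lemma act_key s a st : valid st -> Af s a ->
  headval s (act s a st).1 (act s a st).2 = gmul a (headval s st.1 st.2) /\
  tailof s (act s a st).2 = tailof s st.2.
Proof.
move=> vs Aa; case: (vs) => _ sl _.
have hd := tailof_hd s sl.
rewrite /act /mk /=; dem => [er|ner] /=.
  by rewrite headval_ne // tailof_ne // er inv1 gmul1r.
by rewrite eqxx mulgVK.
Qed.

Lemma act_mul s a b st : valid st -> Af s a -> Af s b ->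
  act s (gmul a b) st = act s a (act s b st).
Proof.
move=> vs Aa Ab.
rewrite {2}/act; case: (act_key vs Ab) => -> ->.
by rewrite /act gmulA.
Qed.

Lemma act_one s st : valid st -> act s gone st = st.
Proof.
case: st => c l [/= Cc sl Fl].
rewrite /act /mk /=.
case: l sl Fl => [|[s' t] l] sl Fl /=.
  rewrite gmul1l; have e : rep s c = gone by case: (rep_spec (cAf s Cc)) => _ _ ->.
  by rewrite e inv1 gmul1r; dem.
case: (eqVneq s' s) => [es|ne].
  subst s'; move/List.Forall_cons_iff: Fl => [[/= At [rt nt]] _].
  rewrite gmul1l rep_C // rt; dem => //= _.
  by rewrite mulgK.
rewrite gmul1l; have e : rep s c = gone by case: (rep_spec (cAf s Cc)) => _ _ ->.
by rewrite e inv1 gmul1r; dem.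
Qed.

Lemma act_compat c st : C c -> valid st -> act false c st = act true c st.
Proof.
case: st => c0 l Cc [/= Cc0 sl Fl].
have Ccc : C (gmul c c0) by apply: cM.
have e0 s : rep s (gmul c c0) = gone.
  by case: (rep_spec (cAf s Ccc)) => _ _ ->.
rewrite /act /mk /=.
case: l sl Fl => [|[s' t] l] sl Fl /=.
  by rewrite !e0; dem.
move/List.Forall_cons_iff: Fl => [[/= At [rt nt]] _].
case: s' sl At rt nt => sl At rt nt /=;
  rewrite e0 gmulA rep_C // rt; do 2 dem => //= ? ; by rewrite ?mulgK ?inv1 ?gmul1r.
Qed.

Lemma act_step s a c l : valid (c, l) -> hd_ne s l -> Af s a -> ~ C a ->
  exists c' r, act s a (c, l) = (c', (s, r) :: l).
Proof.
move=> [/= Cc _ _] hl Aa nCa.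
rewrite /act /mk /= headval_ne // tailof_ne //.
dem => [er|ner]; last by eexists; eexists.
exfalso; apply: nCa; apply: (ccr Cc).
apply: (rep_one_C (s := s)) => //; apply: afM => //; exact: cAf.
Qed.

Definition V := {st : State | valid st}.

Definition actV s a (Aa : Af s a) (v : V) : V :=
  exist _ (act s a (proj1_sig v)) (valid_act (proj2_sig v) Aa).

Lemma actV_inv s a (Aa : Af s a) (Ai : Af s (ginv a)) v : actV Aa (actV Ai v) = v.
Proof.
case: v => st vs; apply: sig_ext => /=.
by rewrite -act_mul // gmulVr act_one.
Qed.
Lemma actV_inv' s a (Aa : Af s a) (Ai : Af s (ginv a)) v : actV Ai (actV Aa v) = v.
Proof.
case: v => st vs; apply: sig_ext => /=.
by rewrite -act_mul // gmulVl act_one.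
Qed.

Definition actSym (s : bool) (a : G) : Sym V :=
  match excluded_middle_informative (Af s a) with
  | left Aa => @Perm V (actV Aa) (actV (afV Aa)) (actV_inv Aa (afV Aa)) (actV_inv' Aa (afV Aa))
  | right _ => pone V
  end.

Lemma actSym_val s a v : Af s a -> proj1_sig (pf (actSym s a) v) = act s a (proj1_sig v).
Proof. by move=> Aa; rewrite /actSym; dem. Qed.

Lemma actSym_mul s a b : Af s a -> Af s b ->
  actSym s (gmul a b) = gmul (actSym s a) (actSym s b).
Proof.
move=> Aa Ab; apply: perm_ext => v; apply: sig_ext => /=.
rewrite !actSym_val //; last by apply: afM.
by rewrite act_mul //; exact: proj2_sig.
Qed.

Lemma actSym_one s : actSym s gone = gone.
Proof.
apply: perm_ext => v; apply: sig_ext => /=.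
rewrite actSym_val; last by case: (Af_sub HA HB s).
by rewrite act_one //; exact: proj2_sig.
Qed.

Lemma actSym_pow s a k : Af s a -> actSym s (gpow a k) = gpow (actSym s a) k.
Proof.
move=> Aa; elim: k => [|k IH]; first exact: actSym_one.
rewrite !gpowS actSym_mul ?IH //; exact: subgrp_pow (Af_sub HA HB s) Aa.
Qed.

Lemma actSym_compat c : C c -> actSym false c = actSym true c.
Proof.
move=> Cc; apply: perm_ext => v; apply: sig_ext.
rewrite !actSym_val; [|exact: CB|exact: CA].
by apply: act_compat => //; exact: proj2_sig.
Qed.

Lemma valid0 : valid (gone, [::]).
Proof. split => //=; exact: c1. Qed.

Theorem vdw_NF (X : Type) (F : G -> X -> X) (i : V -> X) :
  injective i -> (forall x y z, F (gmul x y) z = F x (F y z)) ->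
  (forall s a v, Af s a -> F a (i v) = i (pf (actSym s a) v)) ->
  forall L, L <> [::] -> alt A B C L -> ~ C (prodL L).
Proof.
move=> inj_i Fm Fa.
pose v0 : V := exist _ _ valid0.
have Fe : F gone (i v0) = i v0.
  by rewrite (Fa false) ?actSym_one //; case: HA.
have key : forall L, L <> [::] -> alt A B C L -> exists v : V,
    F (prodL L) (i v0) = i v /\ size (proj1_sig v).2 = size L /\
    hd_ne (~~ (head (true, gone) L).1) (proj1_sig v).2 /\
    (forall p l, (proj1_sig v).2 = p :: l -> p.1 = (head (true, gone) L).1).
  elim => [//|[s a] L IH] _ [sL /List.Forall_cons_iff [[/= Aa nCa] FL]].
  have [v [e1 [e2 e3]]] : exists v : V, F (prodL L) (i v0) = i v /\
     size (proj1_sig v).2 = size L /\ hd_ne s (proj1_sig v).2.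
    case: L sL FL IH => [|q L] sL FL IH.
      by exists v0; split.
    have [v [e1 [e2 [_ e4]]]] := IH (fun e => ltac:(done)) (conj (path_sorted sL) FL).
    exists v; split => //; split => //.
    case: (proj1_sig v).2 e4 => //= p l e4; rewrite (e4 p l) //.
    by move: sL => /= /andP [] ; rewrite /tagne /= eq_sym.
  case: v e1 e2 e3 => [[c l] vv] /= e1 e2 e3.
  have [c' [r er]] := act_step vv e3 Aa nCa.
  have vv' : valid (c', (s, r) :: l) by rewrite -er; apply: valid_act.
  exists (exist _ _ vv'); split; last first.
    split; first by rewrite /= e2.
    split => //=; first by case: (s).
    by move=> p l' [<- _].
  rewrite /= Fm e1 (Fa s) //; congr i; apply: sig_ext.
  by rewrite actSym_val.
move=> L nL aL CL.
have [v [e1 [e2 _]]] := key L nL aL.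
have Ap : Af false (prodL L) by apply: CA.
rewrite (Fa false _ _ Ap) in e1.
have := inj_i _ _ e1 => ev.
have := f_equal (fun w => size (proj1_sig w).2) ev.
rewrite actSym_val //= e2 /act /mk /= gmul1r.
have -> : rep false (prodL L) = gone by case: (rep_spec Ap) => _ _ ->.
dem => //= _ /= ; case: L nL {key aL CL Ap e1 ev e2} => //.
Qed.
End VdW.

Definition invL (G : Grp) (L : seq (bool * G)) := rev (map (fun p => (p.1, ginv p.2)) L).

Lemma prodL_invL (G : Grp) (L : seq (bool * G)) : prodL (invL L) = ginv (prodL L).
Proof.
elim: L => [|p L IH]; first by rewrite /= inv1.
by rewrite /invL /= rev_cons prodL_rcons -/(invL L) IH /= invgM.
Qed.

Lemma words_of_cl (G : Grp) (A B S : G -> Prop) : subgrp A -> subgrp B ->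
  (forall x, S x -> A x \/ B x) -> forall y, cl S y ->
  exists L, List.Forall (fun p => Af A B p.1 p.2) L /\ y = prodL L.
Proof.
move=> HA HB hS y; elim=> [x /hS [Ax|Bx]| |x z _ [L1 [F1 e1]] _ [L2 [F2 e2]]|x _ [L [F e]]].
- by exists [:: (false, x)]; split; [constructor|rewrite /= gmul1r].
- by exists [:: (true, x)]; split; [constructor|rewrite /= gmul1r].
- by exists [::].
- exists (L1 ++ L2); split; first by apply/Forall_cat.
  by rewrite prodL_cat e1 e2.
- exists (invL L); split; last by rewrite prodL_invL e.
  rewrite /invL; elim: L F {e} => [|p L IH] //= /List.Forall_cons_iff [Ap FL].
  rewrite rev_cons -cats1; apply/Forall_cat; split; first exact: IH.
  constructor => //; exact: (AfV HA HB).
Qed.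

Lemma cl_image (G H : Grp) (S : G -> Prop) (S' : H -> Prop) (phi : H -> G) :
  is_hom phi -> (forall s, S s -> exists s', S' s' /\ phi s' = s) ->
  forall y, cl S y -> exists y', cl S' y' /\ phi y' = y.
Proof.
move=> hp hS y; elim=> [x /hS [s' [h1 h2]]| |x z _ [x' [c1 e1]] _ [z' [c2 e2]]|x _ [x' [c e]]].
- by exists s'; split => //; apply: cl_gen.
- by exists gone; split; [exact: cl_one| exact: hom1].
- by exists (gmul x' z'); split; [exact: cl_mul| rewrite hp e1 e2].
- by exists (ginv x'); split; [exact: cl_inv| rewrite (homV hp) e].
Qed.

Lemma cl_single (G : Grp) (x y : G) : cl (fun z => z = x) y ->
  exists n, y = gpow x n \/ y = ginv (gpow x n).
Proof.
have gpow_sub a d : gmul (gpow x (d + a)) (ginv (gpow x a)) = gpow x d.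
  by rewrite gpowD mulgK.
have gpow_sub' a d : gmul (gpow x a) (ginv (gpow x (d + a))) = ginv (gpow x d).
  by rewrite gpowD invgM gmulA gmulVr gmul1l.
elim=> [z ->| |a b _ [n1 [e1|e1]] _ [n2 [e2|e2]]|z _ [n [e|e]]].
- by exists 1; left; rewrite /gpow /= gmul1r.
- by exists 0; left.
- by exists (n1 + n2); left; rewrite e1 e2 gpowD.
- subst; case: (leqP n2 n1) => h.
    by exists (n1 - n2); left; rewrite -{1}(subnK h) gpow_sub.
  exists (n2 - n1); right; by rewrite -{1}(subnK (ltnW h)) gpow_sub'.
- subst; case: (leqP n1 n2) => h.
    by exists (n2 - n1); left; rewrite -{1}(subnK h) addnC gpowD mulKg.
  exists (n1 - n2); right.
  by rewrite -{1}(subnK (ltnW h)) addnC gpowD invgM -gmulA gmulVl gmul1r.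
- by exists (n1 + n2); right; rewrite e1 e2 -invgM -gpowD addnC.
- by exists n; right; rewrite e.
- by exists n; left; rewrite e invgK.
Qed.

Definition rotf (j : Z3) := match j with T0 => T1 | T1 => T2 | T2 => T0 end.
Definition rotg (j : Z3) := match j with T0 => T2 | T1 => T0 | T2 => T1 end.
Definition rot : Sym Z3 := @Perm Z3 rotf rotg (fun j => match j with T0 => erefl | T1 => erefl | T2 => erefl end)
  (fun j => match j with T0 => erefl | T1 => erefl | T2 => erefl end).
Lemma rot3 : gpow rot 3 = gone. Proof. by apply: perm_ext => -[]. Qed.
Lemma rot_ne : rot <> gone. Proof. by move/(f_equal (fun p => pf p T0)). Qed.

Definition sib (eta : seq bool) : seq bool :=
  match rev eta with [::] => [::] | b :: r => rcons (rev r) (~~ b) end.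
Lemma sib_rcons eta b : sib (rcons eta b) = rcons eta (~~ b).
Proof. by rewrite /sib rev_rcons revK. Qed.
Lemma sib_inv x eta b : sib x = rcons eta b -> x = rcons eta (~~ b).
Proof.
case/lastP: x => [|x c]; first by rewrite /sib /=; case: eta.
by rewrite sib_rcons => /eqP; rewrite eqseq_rcons => /andP [/eqP -> /eqP <-]; rewrite negbK.
Qed.

Lemma rcons_nilF (T : eqType) (s : seq T) x : (rcons s x != [::]) = true.
Proof. by case: s. Qed.

Section Main.
Variables (G : Grp) (g : nat -> seq bool -> G).
Hypothesis HP : is_free_product_of_Pbar g.

Lemma g_leaf n eta : 0 < n -> size eta = n.-1 -> gpow (g n eta) 3 = gone.
Proof. by case: HP => [[h _] _]; apply: h. Qed.
Lemma g_int n eta : size eta + 2 <= n ->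
  gmul (g n (rcons eta false)) (g n (rcons eta true)) = gpow (g n eta) 3.
Proof. by case: HP => [[_ h] _]; apply: h. Qed.

Lemma mk_hom (H : Grp) (h : nat -> seq bool -> H) : satisfies_rels h ->
  exists f : G -> H, is_hom f /\ forall n eta, valid_index n eta -> f (g n eta) = h n eta.
Proof. by case: HP => _ U /U []. Qed.

Lemma hom_uniq (H : Grp) (f1 f2 : G -> H) : is_hom f1 -> is_hom f2 ->
  (forall n eta, valid_index n eta -> f1 (g n eta) = f2 (g n eta)) -> forall y, f1 y = f2 y.
Proof.
move=> h1 h2 e y.
have sr : satisfies_rels (fun n eta => f1 (g n eta)).
  split => [n eta n0 sz|n eta sz]; first by rewrite -(homX h1) g_leaf // (hom1 h1).
  by rewrite -h1 g_int // (homX h1).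
case: HP => _ /(_ H _ sr) [_ U].
by apply: U => // n eta v; rewrite e.
Qed.

Definition Gens (x : G) := exists n eta, valid_index n eta /\ x = g n eta.

Lemma gen_all y : cl Gens y.
Proof.
pose S := Sub (cl_subgrp Gens).
pose h n eta : S := match excluded_middle_informative (valid_index n eta) with
  | left v => exist _ (g n eta) (cl_gen (ex_intro _ n (ex_intro _ eta (conj v erefl))))
  | right _ => gone end.
have hv n eta : valid_index n eta -> proj1_sig (h n eta) = g n eta.
  by rewrite /h => v; case: excluded_middle_informative.
have powv (a : S) k : proj1_sig (gpow a k) = gpow (proj1_sig a) k.
  by elim: k => //= k ->.
have sr : satisfies_rels h.
  split => [n eta n0 sz|n eta sz].
    apply: sub_ext; rewrite powv hv ?g_leaf //; split => //; lia.
  apply: sub_ext; rewrite powv /= !hv ?g_int // /valid_index ?size_rcons; split; lia.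
have [s [hs es]] := mk_hom sr.
have e : proj1_sig (s y) = y.
  apply: (@hom_uniq G (fun x => proj1_sig (s x)) id).
  - by move=> a b; rewrite hs.
  - by [].
  - by move=> n eta v; rewrite es // hv.
rewrite -e; exact: proj2_sig.
Qed.

Definition fgen n eta := if size eta + 1 < n then g n.-1 eta else gone.

Lemma f_exists : exists f : G -> G, is_hom f /\
  forall n eta, valid_index n eta -> f (g n eta) = fgen n eta.
Proof.
apply: mk_hom; split => [n eta n0 sz|n eta sz]; rewrite /fgen.
  have -> : (size eta + 1 < n) = false by lia.
  exact: gpow1g.
rewrite !size_rcons.
have -> : size eta + 1 < n by lia.
case: (ltnP (size eta).+1.+1 n) => h.
  rewrite (_ : (size eta).+1 + 1 < n) //; last by lia.
  apply: g_int; lia.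
rewrite (_ : (size eta).+1 + 1 < n = false); last by lia.
by rewrite gmul1l g_leaf //; lia.
Qed.

Lemma g_ne n0 eta0 : valid_index n0 eta0 -> g n0 eta0 <> gone.
Proof.
move=> v.
pose h n eta : Sym Z3 := if (n == n0) && (eta == eta0) then rot
  else if (n == n0) && (eta == sib eta0) && (eta0 != [::]) then ginv rot else gone.
have cube n eta : gpow (h n eta) 3 = gone.
  rewrite /h; case: ifP => _; first exact: rot3.
  case: ifP => _; last exact: gpow1g.
  by rewrite gpow_inv rot3 inv1.
have sr : satisfies_rels h.
  split => [n eta _ _|n eta sz]; first exact: cube.
  rewrite cube /h.
  case: (eqVneq n n0) => [en|nen]; last by apply: perm_ext.
  rewrite /=.
  have nf : (rcons eta true == rcons eta false) = false by rewrite eqseq_rcons andbF.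
  have nf' : (rcons eta false == rcons eta true) = false by rewrite eqseq_rcons andbF.
  case: (eqVneq (rcons eta false) eta0) => [e0|n0'].
    rewrite -e0 sib_rcons nf /= eqxx rcons_nilF /=.
    by apply: perm_ext => -[].
  case: (eqVneq (rcons eta true) eta0) => [e1|n1'].
    rewrite -e1 sib_rcons /= eqxx rcons_nilF /=.
    by apply: perm_ext => -[].
  have -> : (rcons eta false == sib eta0) = false.
    apply/negbTE/eqP => e.
    by rewrite (sib_inv (esym e)) eqxx in n1'.
  have -> : (rcons eta true == sib eta0) = false.
    apply/negbTE/eqP => e.
    by rewrite (sib_inv (esym e)) eqxx in n0'.
  by rewrite /=; apply: perm_ext.
have [phi [hphi ephi]] := mk_hom sr.
move=> e; have := ephi _ _ v; rewrite e (hom1 hphi) /h !eqxx /= => /esym; exact: rot_ne.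
Qed.

Definition shgen n b k zeta := if k == n.-1 then g n (b :: zeta) else gone.

Lemma sh_exists n b : exists sh : G -> G, is_hom sh /\
  forall k zeta, valid_index k zeta -> sh (g k zeta) = shgen n b k zeta.
Proof.
apply: mk_hom; split => [k zeta k0 sz|k zeta sz]; rewrite /shgen.
  case: eqP => [ek|_]; last exact: gpow1g.
  apply: g_leaf; rewrite /=; lia.
case: eqP => [ek|_]; last by rewrite gmul1l gpow1g.
rewrite -!rcons_cons; apply: g_int; rewrite /=; lia.
Qed.

Definition Qgen m := cl (fun x => exists zeta, size zeta < m /\ x = g m zeta).

Lemma sh_inj m b (sh : G -> G) : 2 <= m -> is_hom sh ->
  (forall k zeta, valid_index k zeta -> sh (g k zeta) = shgen m b k zeta) ->
  forall y, Qgen m.-1 y -> sh y = gone -> y = gone.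
Proof.
move=> m2 hsh esh.
pose h n zeta : Sym (G * Z3) := if n == m then
  (match zeta with [::] => croot (Lmul (g m.-1 [::]))
   | c :: z' => if c == b then lift (Lmul (g m.-1 z')) else gone end) else gone.
have LH := @Lmul_hom G.
have lLpow (x : G) k : gpow (lift (Lmul x)) k = lift (Lmul (gpow x k)).
  by rewrite (homX LH x k) (homX (@lift_hom G) (Lmul x) k).
have hn n zeta : n != m -> h n zeta = gone by rewrite /h => /negbTE ->.
have h0 : h m [::] = croot (Lmul (g m.-1 [::])) by rewrite /h eqxx.
have hc c z : h m (c :: z) = if c == b then lift (Lmul (g m.-1 z)) else gone.
  by rewrite /h eqxx.
have sr : satisfies_rels h.
  split => [n zeta n0 sz|n zeta sz].
    case: (eqVneq n m) => [en|nen]; last by rewrite hn // gpow1g.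
    subst n; case: zeta sz => [|c z'] sz; first by move: sz => /=; lia.
    rewrite hc; case: eqP => _; last exact: gpow1g.
    rewrite lLpow g_leaf; [by rewrite (hom1 LH) (hom1 (@lift_hom G)) | lia | move: sz => /=; lia].
  case: (eqVneq n m) => [en|nen]; last by rewrite !hn // gmul1l gpow1g.
  subst n; case: zeta sz => [|c z'] sz.
    change (rcons [::] false) with [:: false]; change (rcons [::] true) with [:: true].
    rewrite !hc h0 croot3.
    by case: (b); apply: perm_ext => -[y []].
  rewrite !rcons_cons !hc; case: eqP => _; last by rewrite gmul1l gpow1g.
  rewrite -(@lift_hom G) -LH lLpow g_int //.
  by move: sz; rewrite /=; lia.
have [r [hr er]] := mk_hom sr.
have key : forall y, Qgen m.-1 y -> r (sh y) = lift (Lmul y).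
  apply: (@agree_cl _ _ _ (fun _ => True)) => //.
  - exact: (hom_comp hsh hr).
  - by move=> x y _ _; rewrite LH (@lift_hom G).
  move=> x [zeta [sz ->]].
  rewrite esh; last by split => //; lia.
  rewrite /shgen eqxx er; last by rewrite /valid_index /=; lia.
  by rewrite hc eqxx.
move=> y qy e.
have := key y qy; rewrite e (hom1 hr) => /(f_equal (fun p => pf p (gone, T0))) /=.
by rewrite gmul1r => -[].
Qed.
End Main.

Lemma subgrp_one (G : Grp) : subgrp (fun x : G => x = gone).
Proof. split => //= [x y -> ->|x ->]; [exact: gmul1l|exact: inv1]. Qed.

Section Inst.
Variables (G : Grp) (g : nat -> seq bool -> G).
Hypothesis HP : is_free_product_of_Pbar g.
Variable m : nat.
Hypothesis m2 : 2 <= m.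

Definition Aa := cl (fun x => x = g m [::]).
Definition Ba := cl (fun x => exists zeta, 0 < size zeta < m /\ x = g m zeta).
Definition Ca := cl (fun x => x = gpow (g m [::]) 3).

Lemma HAa : subgrp Aa. Proof. exact: cl_subgrp. Qed.
Lemma HBa : subgrp Ba. Proof. exact: cl_subgrp. Qed.
Lemma HCa : subgrp Ca. Proof. exact: cl_subgrp. Qed.
Lemma Aa_x : Aa (g m [::]). Proof. exact: cl_gen. Qed.
Lemma Ba_g zeta : 0 < size zeta < m -> Ba (g m zeta).
Proof. by move=> h; apply: cl_gen; exists zeta. Qed.
Lemma x3_eq : gpow (g m [::]) 3 = gmul (g m [:: false]) (g m [:: true]).
Proof. by rewrite -(g_int HP (eta := [::])). Qed.
Lemma CAa x : Ca x -> Aa x.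
Proof. apply: cl_min; first exact: HAa. move=> y ->; exact: subgrp_pow HAa Aa_x. Qed.
Lemma CBa x : Ca x -> Ba x.
Proof.
apply: cl_min; first exact: HBa. move=> y ->; rewrite x3_eq.
by apply: cl_mul; apply: Ba_g => /=; lia.
Qed.

Local Notation act := (actSym HAa HBa HCa CAa CBa).
Lemma NF1 : forall L, L <> [::] -> alt Aa Ba Ca L -> ~ Ca (prodL L).
Proof.
pose h n zeta : Sym (V Aa Ba Ca) := if n == m then
   (if zeta is [::] then act false (g m [::]) else act true (g m zeta)) else gone.
have hn n zeta : n != m -> h n zeta = gone by rewrite /h => /negbTE ->.
have h0 : h m [::] = act false (g m [::]) by rewrite /h eqxx.
have hc zeta : zeta != [::] -> h m zeta = act true (g m zeta).
  by rewrite /h eqxx; case: zeta.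
have sr : satisfies_rels h.
  split => [n zeta n0 sz|n zeta sz].
    case: (eqVneq n m) => [en|nen]; last by rewrite hn // gpow1g.
    subst n; rewrite hc; last by case: zeta sz => //= ?; lia.
    rewrite -actSym_pow; last by apply: Ba_g; lia.
    by rewrite g_leaf ?actSym_one //; lia.
  case: (eqVneq n m) => [en|nen]; last by rewrite !hn // gmul1l gpow1g.
  subst n; rewrite (hc (rcons zeta false)) ?rcons_nilF // (hc (rcons zeta true)) ?rcons_nilF //.
  rewrite -actSym_mul; try by apply: Ba_g; rewrite size_rcons; lia.
  rewrite g_int //.
  case: (eqVneq zeta [::]) => [ez|nz].
    subst zeta; rewrite h0 -actSym_pow; last exact: Aa_x.
    by rewrite actSym_compat //; apply: cl_gen.
  rewrite hc // -actSym_pow //; apply: Ba_g.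
  by case: zeta nz sz => //= *; lia.
have [rho [hrho erho]] := mk_hom HP sr.
have rho_act : forall s a, Af Aa Ba s a -> rho a = act s a.
  case=> a /= Ha.
    apply: (@agree_cl _ _ _ Ba rho (act true) HBa (fun x h => h) hrho _ _ a Ha).
    - by move=> x y Hx Hy; rewrite actSym_mul.
    - move=> x [zeta [sz ->]]; rewrite erho; last by split; lia.
      by rewrite hc //; case: zeta sz.
  apply: (@agree_cl _ _ _ Aa rho (act false) HAa (fun x h => h) hrho _ _ a Ha).
  - by move=> x y Hx Hy; rewrite actSym_mul.
  - move=> x ->; rewrite erho ?h0 //; split => /=; lia.
apply: (@vdw_NF G Aa Ba Ca HAa HBa HCa CAa CBa _ (fun x v => pf (rho x) v) id).
- by move=> x y.
- by move=> x y z; rewrite hrho.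
- by move=> s a v Ha; rewrite (rho_act s).
Qed.

Definition A2 (b : bool) := cl (fun x => exists z, size z < m.-1 /\ x = g m (b :: z)).
Definition C2 := fun x : G => x = gone.
Lemma HA2 b : subgrp (A2 b). Proof. exact: cl_subgrp. Qed.
Lemma HC2 : subgrp C2. Proof. exact: subgrp_one. Qed.
Lemma CA2 b x : C2 x -> A2 b x. Proof. by move=> ->; apply: cl_one. Qed.
Lemma A2_g b z : size z < m.-1 -> A2 b (g m (b :: z)).
Proof. by move=> h; apply: cl_gen; exists z. Qed.
Lemma Af2 b x : Af (A2 false) (A2 true) b x = A2 b x. Proof. by case: b. Qed.

Local Notation act2 := (actSym (HA2 false) (HA2 true) HC2 (@CA2 false) (@CA2 true)).
Lemma NF2 : forall L, L <> [::] -> alt (A2 false) (A2 true) C2 L -> ~ C2 (prodL L).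
Proof.
pose h n zeta : Sym (V (A2 false) (A2 true) C2 * Z3) := if n == m then
   (match zeta with [::] => croot (gmul (act2 false (g m [:: false])) (act2 true (g m [:: true])))
    | c :: z => lift (act2 c (g m (c :: z))) end) else gone.
have hn n zeta : n != m -> h n zeta = gone by rewrite /h => /negbTE ->.
have h0 : h m [::] = croot (gmul (act2 false (g m [:: false])) (act2 true (g m [:: true]))).
  by rewrite /h eqxx.
have hc c z : h m (c :: z) = lift (act2 c (g m (c :: z))) by rewrite /h eqxx.
have LH := @lift_hom (V (A2 false) (A2 true) C2).
have sr : satisfies_rels h.
  split => [n zeta n0 sz|n zeta sz].
    case: (eqVneq n m) => [en|nen]; last by rewrite hn // gpow1g.
    subst n; case: zeta sz => [|c z] sz; first by move: sz => /=; lia.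
    rewrite hc -(homX LH) -actSym_pow; last by rewrite Af2; apply: A2_g; move: sz => /=; lia.
    by rewrite g_leaf // actSym_one (hom1 LH).
  case: (eqVneq n m) => [en|nen]; last by rewrite !hn // gmul1l gpow1g.
  subst n; case: zeta sz => [|c z] sz.
    change (rcons [::] false) with [:: false]; change (rcons [::] true) with [:: true].
    by rewrite !hc h0 croot3 LH.
  rewrite !rcons_cons !hc -LH -actSym_mul; try by rewrite Af2; apply: A2_g; rewrite size_rcons; move: sz => /=; lia.
  rewrite -!rcons_cons g_int // -(homX LH) -actSym_pow //.
  by rewrite Af2; apply: A2_g; move: sz => /=; lia.
have [rho [hrho erho]] := mk_hom HP sr.
have rho_act : forall s a, Af (A2 false) (A2 true) s a -> rho a = lift (act2 s a).
  move=> s a; rewrite Af2 => Ha.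
  apply: (@agree_cl _ _ _ (A2 s) rho (fun x => lift (act2 s x)) (HA2 s) (fun x h => h) hrho _ _ a Ha).
  - by move=> x y Hx Hy; rewrite actSym_mul ?Af2 // LH.
  - move=> x [z [sz ->]]; rewrite erho; last by split => /=; lia.
    by rewrite hc.
apply: (@vdw_NF G (A2 false) (A2 true) C2 (HA2 false) (HA2 true) HC2 (@CA2 false) (@CA2 true) _ (fun x v => pf (rho x) v) (fun v => (v, T0))).
- by move=> x y [].
- by move=> x y z; rewrite hrho.
- by move=> s a v Ha; rewrite (rho_act s).
Qed.

Lemma g_inf N : gpow (g m [::]) N = gone -> N = 0.
Proof.
move=> e; case: N e => // N e; exfalso.
have ne0 : g m [:: false] <> gone by apply: (g_ne HP); split => /=; lia.
have ne1 : g m [:: true] <> gone by apply: (g_ne HP); split => /=; lia.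
have al : alt (A2 false) (A2 true) C2 ((false, g m [:: false]) :: rcons [::] (true, g m [:: true])).
  split => //; constructor; first by split; [apply: A2_g => /=; lia | exact: ne0].
  by constructor => //; split; [apply: A2_g => /=; lia | exact: ne1].
apply: (cyc_red_notors HC2 NF2 al _ (ltn0Sn N)) => //.
have -> : prodL ((false, g m [:: false]) :: rcons [::] (true, g m [:: true])) = gpow (g m [::]) 3.
  by rewrite x3_eq /= gmul1r.
by rewrite -gpowM mulnC gpowM e gpow1g.
Qed.
End Inst.

Lemma conj_pow (G : Grp) (y c z : G) k : y = gmul (ginv c) (gmul z c) ->
  gpow y k = gone -> gpow z k = gone.
Proof.
move=> -> ; rewrite gpow_conj => e.
apply: (@mulg_lcancel _ (ginv c)); apply: (@mulg_rcancel _ c).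
by rewrite -gmulA e gmul1r gmulVl.
Qed.

Lemma inv_one (G : Grp) (x : G) : ginv x = gone -> x = gone.
Proof. by move=> e; rewrite -(invgK x) e inv1. Qed.

Definition Gall (G : Grp) (g : nat -> seq bool -> G) M :=
  cl (fun x => exists n eta, 0 < n <= M /\ size eta < n /\ x = g n eta).

Section Tors.
Variables (G : Grp) (g : nat -> seq bool -> G).
Hypothesis HP : is_free_product_of_Pbar g.
Variables (f : G -> G) (hf : is_hom f).
Hypothesis ef : forall n eta, valid_index n eta -> f (g n eta) = fgen g n eta.

Lemma conj_kill (y c z : G) : f z = gone -> y = gmul (ginv c) (gmul z c) -> f y = gone.
Proof. by move=> fz ->; rewrite !hf fz gmul1l (homV hf) gmulVl. Qed.

Lemma f_sh m b (sh sh' : G -> G) : 2 <= m -> is_hom sh -> is_hom sh' ->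
  (forall k zeta, valid_index k zeta -> sh (g k zeta) = shgen g m b k zeta) ->
  (forall k zeta, valid_index k zeta -> sh' (g k zeta) = shgen g m.-1 b k zeta) ->
  forall y, Qgen g m.-1 y -> f (sh y) = sh' (f y).
Proof.
move=> m2 hsh hsh' esh esh'.
apply: (@agree_cl _ _ _ (fun _ => True)) => //.
- exact: (hom_comp hsh hf).
- by move=> x y _ _; rewrite hf hsh'.
move=> x [zeta [sz ->]].
rewrite esh; last by split => //; lia.
rewrite /shgen eqxx ef; last by split => /=; lia.
rewrite ef; last by split => //; lia.
rewrite /fgen /=.
case: (ltnP (size zeta + 1) m.-1) => h.
  rewrite (_ : (size zeta).+1 + 1 < m); last by lia.
  rewrite esh'; last by split; lia.
  by rewrite /shgen eqxx.
rewrite (_ : (size zeta).+1 + 1 < m = false); last by lia.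
by rewrite (hom1 hsh').
Qed.

Theorem torsQ m : forall y, Qgen g m y -> forall k, 0 < k -> gpow y k = gone -> f y = gone.
Proof.
elim: m => [|m IH] y qy k k0 e.
  apply: (hom_kill_cl hf _ qy) => x [zeta [sz _]] //.
case: m IH qy => [|m] IH qy.
  apply: (hom_kill_cl hf _ qy) => x [zeta [sz ->]].
  by rewrite ef ?/fgen; [case: (size zeta) sz | split].
set M := m.+2.
have M2 : 2 <= M by [].
have [L [FL ey]] : exists L, List.Forall (fun p => Af (Aa g M) (Ba g M) p.1 p.2) L /\ y = prodL L.
  apply: (words_of_cl (HAa g M) (HBa g M) _ qy) => x [zeta [sz ->]].
  case: zeta sz => [|c z] sz; first by left; exact: Aa_x.
  by right; apply: Ba_g.
subst y.
have [c [z [Hz ez]]] := torsion_conj (HAa g M) (HBa g M) (HCa g M) (@CAa _ g M) (CBa HP M2) (NF1 HP M2) FL k0 e.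
apply: (conj_kill _ ez).
have ez' := conj_pow ez e.
case: Hz => Hz.
  have [n [en|en]] := cl_single Hz.
    have nk : n * k = 0 by apply: (g_inf HP M2); rewrite gpowM -en.
    have n0 : n = 0 by move/eqP: nk; rewrite muln_eq0 => /orP [/eqP //| /eqP kk]; rewrite kk in k0.
    by rewrite en n0 (hom1 hf).
  have nk : n * k = 0.
    apply: (g_inf HP M2); rewrite gpowM; apply: inv_one; rewrite -gpow_inv -en //.
  have n0 : n = 0 by move/eqP: nk; rewrite muln_eq0 => /orP [/eqP //| /eqP kk]; rewrite kk in k0.
  by rewrite en n0 inv1 (hom1 hf).
have [L2 [FL2 ez2]] : exists L, List.Forall (fun p => Af (A2 g M false) (A2 g M true) p.1 p.2) L
    /\ z = prodL L.
  apply: (words_of_cl (HA2 g M false) (HA2 g M true) _ Hz) => x [zeta [sz ->]].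
  case: zeta sz => [|[] z'] sz; first by move: sz => /=; lia.
    by right; apply: A2_g; move: sz => /=; lia.
  by left; apply: A2_g; move: sz => /=; lia.
rewrite ez2 in ez' *.
have [c2 [w [Hw ew]]] := torsion_conj (HA2 g M false) (HA2 g M true) (HC2 G) (@CA2 _ g M false)
   (@CA2 _ g M true) (NF2 HP M2) FL2 k0 ez'.
apply: (conj_kill _ ew).
have ew' := conj_pow ew ez'.
have [b Hb] : exists b, A2 g M b w by case: Hw => h; [exists false | exists true].
have [sh [hsh esh]] := sh_exists HP M b.
have [sh' [hsh' esh']] := sh_exists HP M.-1 b.
have [w' [qw' ew'']] : exists w', Qgen g M.-1 w' /\ sh w' = w.
  apply: (cl_image hsh _ Hb) => s [z' [sz ->]].
  exists (g M.-1 z'); split; first by exists z'.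
  by rewrite esh; [rewrite /shgen eqxx | split; lia].
have tw' : gpow w' k = gone.
  apply: (sh_inj HP M2 hsh esh); first exact: subgrp_pow (cl_subgrp _) qw'.
  by rewrite (homX hsh) ew''.
have fw' : f w' = gone by apply: (IH w' qw' k k0 tw').
by rewrite -ew'' (f_sh M2 hsh hsh' esh esh' qw') fw' (hom1 hsh').
Qed.
End Tors.

Section NF3.
Variables (G : Grp) (g : nat -> seq bool -> G).
Hypothesis HP : is_free_product_of_Pbar g.
Variable M : nat.

Lemma HA3 : subgrp (Gall g M). Proof. exact: cl_subgrp. Qed.
Lemma HB3 : subgrp (Qgen g M.+1). Proof. exact: cl_subgrp. Qed.
Lemma gA3 n eta : 0 < n <= M -> size eta < n -> Gall g M (g n eta).
Proof. by move=> h1 h2; apply: cl_gen; exists n, eta. Qed.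
Lemma gB3 eta : size eta < M.+1 -> Qgen g M.+1 (g M.+1 eta).
Proof. by move=> h; apply: cl_gen; exists eta. Qed.

Lemma NF3 : forall L, L <> [::] -> alt (Gall g M) (Qgen g M.+1) (@C2 G) L -> ~ (@C2 G) (prodL L).
Proof.
have CA3 x : (@C2 G) x -> Gall g M x by move=> ->; apply: cl_one.
have CB3 x : (@C2 G) x -> Qgen g M.+1 x by move=> ->; apply: cl_one.
pose act := actSym HA3 HB3 (HC2 G) CA3 CB3.
pose h n eta : Sym (V (Gall g M) (Qgen g M.+1) (@C2 G)) :=
  if n <= M then act false (g n eta) else if n == M.+1 then act true (g n eta) else gone.
have hA n eta : n <= M -> h n eta = act false (g n eta) by rewrite /h => ->.
have hB eta : h M.+1 eta = act true (g M.+1 eta) by rewrite /h ltnn eqxx.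
have hN n eta : M.+1 < n -> h n eta = gone.
  move=> hn; rewrite /h.
  have -> : (n <= M) = false by apply/negbTE; rewrite -ltnNge; apply: ltnW.
  have -> : (n == M.+1) = false by apply/negbTE; rewrite neq_ltn hn orbT.
  by [].
have sr : satisfies_rels h.
  split => [n eta n0 sz|n eta sz].
    case: (leqP n M) => hn.
      rewrite hA // /act -actSym_pow; last by apply: gA3; lia.
      by rewrite (g_leaf HP) // actSym_one.
    case: (eqVneq n M.+1) => [en|nen].
      subst n; rewrite hB /act -actSym_pow; last by apply: gB3; lia.
      by rewrite (g_leaf HP) // actSym_one.
    by rewrite hN ?gpow1g //; lia.
  case: (leqP n M) => hn.
    rewrite !hA // /act -actSym_mul; try by apply: gA3; rewrite ?size_rcons; lia.
    by rewrite (g_int HP) // actSym_pow //; apply: gA3; lia.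
  case: (eqVneq n M.+1) => [en|nen].
    subst n; rewrite !hB /act -actSym_mul; try by apply: gB3; rewrite ?size_rcons; lia.
    by rewrite (g_int HP) // actSym_pow //; apply: gB3; lia.
  by rewrite !hN ?gmul1l ?gpow1g //; lia.
have [rho [hrho erho]] := mk_hom HP sr.
have rho_act : forall s a, Af (Gall g M) (Qgen g M.+1) s a -> rho a = act s a.
  case=> a /= Ha.
    apply: (@agree_cl _ _ _ (Qgen g M.+1) rho (act true) HB3 (fun x h => h) hrho _ _ a Ha).
    - by move=> x y Hx Hy; rewrite /act actSym_mul.
    - move=> x [eta [sz ->]]; rewrite erho; last by split; lia.
      by rewrite hB.
  apply: (@agree_cl _ _ _ (Gall g M) rho (act false) HA3 (fun x h => h) hrho _ _ a Ha).
  - by move=> x y Hx Hy; rewrite /act actSym_mul.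
  - move=> x [n [eta [hn [sz ->]]]]; rewrite erho; last by split; lia.
    by rewrite hA //; lia.
apply: (@vdw_NF G (Gall g M) (Qgen g M.+1) (@C2 G) HA3 HB3 (HC2 G) CA3 CB3 _ (fun x v => pf (rho x) v) id).
- by move=> x y.
- by move=> x y z; rewrite hrho.
- by move=> s a v Ha; rewrite (rho_act s).
Qed.
End NF3.

Section Tors2.
Variables (G : Grp) (g : nat -> seq bool -> G).
Hypothesis HP : is_free_product_of_Pbar g.
Variables (f : G -> G) (hf : is_hom f).
Hypothesis ef : forall n eta, valid_index n eta -> f (g n eta) = fgen g n eta.

Theorem torsG M : forall y, Gall g M y -> forall k, 0 < k -> gpow y k = gone -> f y = gone.
Proof.
elim: M => [|M IH] y qy k k0 e.
  apply: (hom_kill_cl hf _ qy) => x [n [eta [hn _]]]; lia.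
have CA3 x : C2 x -> Gall g M x by move=> ->; apply: cl_one.
have CB3 x : C2 x -> Qgen g M.+1 x by move=> ->; apply: cl_one.
have [L [FL ey]] : exists L, List.Forall (fun p => Af (Gall g M) (Qgen g M.+1) p.1 p.2) L /\ y = prodL L.
  apply: (words_of_cl (HA3 g M) (HB3 g M) _ qy) => x [n [eta [hn [sz ->]]]].
  case: (leqP n M) => h; first by left; apply: gA3; lia.
  right; have -> : n = M.+1 by lia.
  apply: gB3; lia.
subst y.
have [c [z [Hz ez]]] := torsion_conj (HA3 g M) (HB3 g M) (HC2 G) CA3 CB3 (NF3 HP (M:=M)) FL k0 e.
apply: (conj_kill hf _ ez).
have ez' := conj_pow ez e.
case: Hz => Hz; first exact: (IH z Hz k k0 ez').
exact: (torsQ HP hf ef Hz k0 ez').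
Qed.

Lemma Gall_mono M M' y : M <= M' -> Gall g M y -> Gall g M' y.
Proof.
move=> le; apply: cl_mono => x [n [eta [hn [sz ->]]]].
exists n, eta; split => //; lia.
Qed.

Theorem tors_all y k : 0 < k -> gpow y k = gone -> f y = gone.
Proof.
move=> k0 e.
have [M HM] : exists M, Gall g M y.
  elim: (gen_all HP y) => [x [n [eta [[n0 sz] ->]]]| |a b _ [M1 h1] _ [M2 h2]|a _ [M1 h1]].
  - by exists n; apply: cl_gen; exists n, eta; split => //; lia.
  - by exists 0; apply: cl_one.
  - exists (maxn M1 M2); apply: cl_mul.
      by apply: Gall_mono h1; apply: leq_maxl.
    by apply: Gall_mono h2; apply: leq_maxr.
  - by exists M1; apply: cl_inv.
exact: (torsG HM k0 e).
Qed.
End Tors2.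

Lemma nc_normal (G : Grp) (S : G -> Prop) : normal_subgroup (normal_closure S).
Proof.
split.
- by move=> N [h1 _ _ _] _.
- by move=> x y hx hy N hN hS; case: (hN) => _ h _ _; apply: h; [apply: hx|apply: hy].
- by move=> x hx N hN hS; case: (hN) => _ _ h _; apply: h; apply: hx.
- by move=> x z hx N hN hS; case: (hN) => _ _ _ h; apply: h; apply: hx.
Qed.

Lemma nc_sub (G : Grp) (S : G -> Prop) x : S x -> normal_closure S x.
Proof. by move=> Sx N _ h; apply: h. Qed.

Lemma nc_min (G : Grp) (S N : G -> Prop) : normal_subgroup N -> (forall s, S s -> N s) ->
  forall x, normal_closure S x -> N x.
Proof. by move=> hN hS x hx; apply: hx. Qed.

Lemma Tor_one (G : Grp) i : @Tor G i gone.
Proof. case: i => [//|i] /=; by case: (nc_normal (fun g0 : G => exists k, 0 < k /\ Tor i (gpow g0 k))). Qed.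

Lemma Tor1_tors (G : Grp) (x : G) k : 0 < k -> gpow x k = gone -> @Tor G 1 x.
Proof. by move=> k0 e; apply: nc_sub; exists k. Qed.

Section Pullback.
Variables (G H : Grp) (f : G -> H) (hf : is_hom f).
Hypothesis surj : forall y, exists x, f x = y.
Hypothesis ker : forall x, f x = gone <-> @Tor G 1 x.

Lemma Tor_pull i x : @Tor G i.+1 x <-> @Tor H i (f x).
Proof.
elim: i x => [|i IH] x; first by rewrite -ker.
have SS : forall u, (exists k, 0 < k /\ @Tor G i.+1 (gpow u k)) <->
                    (exists k, 0 < k /\ @Tor H i (gpow (f u) k)).
  move=> u; split => -[k [k0 hk]]; exists k; split => //.
    by rewrite -(homX hf); apply/IH.
  by apply/IH; rewrite (homX hf).
split.
- move=> hx.
  pose P := fun y : G => @Tor H i.+1 (f y).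
  have nP : normal_subgroup P.
    case: (nc_normal (fun v : H => exists k, 0 < k /\ @Tor H i (gpow v k))) => h1 h2 h3 h4.
    split; rewrite /P.
    - by rewrite (hom1 hf).
    - by move=> a b ha hb; rewrite hf; apply: h2.
    - by move=> a ha; rewrite (homV hf); apply: h3.
    - by move=> a b ha; rewrite !hf (homV hf); apply: h4.
  apply: (nc_min nP _ hx) => u /SS hu.
  by rewrite /P; apply: nc_sub.
- move=> hx.
  pose M := @Tor G i.+2.
  have nM : normal_subgroup M by exact: nc_normal.
  pose I := fun h : H => exists u, M u /\ f u = h.
  have nI : normal_subgroup I.
    case: nM => h1 h2 h3 h4; split.
    - by exists gone; split => //; exact: (hom1 hf).
    - by move=> a b [u [hu <-]] [v [hv <-]]; exists (gmul u v); split; [apply: h2|rewrite hf].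
    - by move=> a [u [hu <-]]; exists (ginv u); split; [apply: h3|rewrite (homV hf)].
    - move=> a b [u [hu <-]]; have [c <-] := surj b.
      by exists (gmul (ginv c) (gmul u c)); split; [apply: h4|rewrite !hf (homV hf)].
  have [u [Mu eu]] : I (f x).
    apply: (nc_min nI _ hx) => v hv.
    have [u eu] := surj v; exists u; split => //.
    by apply: nc_sub; apply/SS; rewrite eu.
  have T1M : forall y, @Tor G 1 y -> M y.
    apply: nc_min => // s [k [k0 /= ek]].
    apply: nc_sub; exists k; split => //; rewrite ek; exact: (@Tor_one G i.+1).
  have kx : @Tor G 1 (gmul x (ginv u)).
    by apply/ker; rewrite hf (homV hf) eu gmulVr.
  have := T1M _ kx => Mxu.
  rewrite -(mulgVK u x).
  by case: nM => _ h2 _ _; apply: h2.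
Qed.
End Pullback.

Section Final.
Variables (G : Grp) (g : nat -> seq bool -> G).
Hypothesis HP : is_free_product_of_Pbar g.
Variables (f : G -> G) (hf : is_hom f).
Hypothesis ef : forall n eta, valid_index n eta -> f (g n eta) = fgen g n eta.

Let N := @Tor G 1.
Let nN : normal_subgroup N := nc_normal _.

Definition Xinv (S : G -> Prop) := forall z k, N k -> (S (gmul z k) <-> S z).
Definition XT := {S : G -> Prop | Xinv S}.
Definition tr (x : G) (S : G -> Prop) := fun z => S (gmul (ginv x) z).

Lemma tr_inv x S : Xinv S -> Xinv (tr x S).
Proof. by move=> hS z k hk; rewrite /tr /= gmulA; apply: hS. Qed.

Definition trX x (s : XT) : XT := exist _ (tr x (proj1_sig s)) (tr_inv x (proj2_sig s)).

Lemma trX_comp x y s : trX x (trX y s) = trX (gmul x y) s.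
Proof.
apply: sig_ext => /=; apply: functional_extensionality => z.
by rewrite /tr invgM gmulA.
Qed.
Lemma trX_one s : trX gone s = s.
Proof.
apply: sig_ext => /=; apply: functional_extensionality => z.
by rewrite /tr inv1 gmul1l.
Qed.

Definition piX (x : G) : Sym XT.
refine (@Perm XT (trX x) (trX (ginv x)) _ _).
- by move=> s; rewrite trX_comp gmulVr trX_one.
- by move=> s; rewrite trX_comp gmulVl trX_one.
Defined.

Lemma piX_hom : is_hom piX.
Proof. by move=> x y; apply: perm_ext => s /=; rewrite trX_comp. Qed.

Lemma piN u : N u -> piX u = gone.
Proof.
move=> hu; apply: perm_ext => -[S hS]; apply: sig_ext => /=.
apply: functional_extensionality => z; apply: propositional_extensionality.
rewrite /tr.
have -> : gmul (ginv u) z = gmul z (gmul (ginv z) (gmul (ginv u) z)) by rewrite mulVKg.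
apply: hS; case: nN => _ _ h3 h4; apply: h4; exact: h3.
Qed.

Lemma leafN n eta : 0 < n -> size eta = n.-1 -> N (g n eta).
Proof. by move=> n0 sz; apply: (Tor1_tors (k := 3)) => //; apply: (g_leaf HP). Qed.

Lemma ker_sub y : f y = gone -> N y.
Proof.
move=> fy.
pose h n eta := piX (g n.+1 eta).
have sr : satisfies_rels h.
  split => [n eta n0 sz|n eta sz]; rewrite /h.
    rewrite -(homX piX_hom) -(g_int HP); last by lia.
    apply: piN; case: nN => _ h2 _ _; apply: h2; apply: leafN; rewrite ?size_rcons //; lia.
  by rewrite -piX_hom (g_int HP) ?(homX piX_hom) //; lia.
have [psi [hpsi epsi]] := mk_hom HP sr.
have comp : forall y, psi (f y) = piX y.
  apply: (hom_uniq HP (hom_comp hf hpsi) piX_hom) => n eta [n0 sz].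
  rewrite ef; last by split.
  rewrite /fgen; case: ifP => hh.
    rewrite epsi /h; last by split; lia.
    by rewrite prednK.
  rewrite (hom1 hpsi) piN //; apply: leafN => //; lia.
have e := comp y; rewrite fy (hom1 hpsi) in e.
have S0 : Xinv N.
  move=> z k hk; case: nN => h1 h2 h3 _; split => hz.
    by rewrite -(mulgK k z); apply: h2 => //; apply: h3.
  by apply: h2.
have := f_equal (fun p => proj1_sig (pf p (exist _ N S0))) e => /= /(f_equal (fun P => P y)).
move=> E; rewrite E /tr /= gmulVl.
by case: nN.
Qed.

Lemma f_surj y : exists x, f x = y.
Proof.
apply: (@cl_min G (Gens g) (fun y => exists x, f x = y) _ _ y (gen_all HP y)).
  split.
  - by exists gone; exact: (hom1 hf).
  - by move=> a b [u <-] [v <-]; exists (gmul u v); rewrite hf.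
  - by move=> a [u <-]; exists (ginv u); rewrite (homV hf).
move=> x [n [eta [[n0 sz] ->]]].
exists (g n.+1 eta); rewrite ef; last by split; lia.
by rewrite /fgen (_ : size eta + 1 < n.+1) //; lia.
Qed.

Lemma f_ker x : f x = gone <-> N x.
Proof.
split; first exact: ker_sub.
move=> hx; apply: (@nc_min G _ (fun x => f x = gone) _ _ x hx).
  split.
  - exact: (hom1 hf).
  - by move=> a b ha hb; rewrite hf ha hb gmul1l.
  - by move=> a ha; rewrite (homV hf) ha inv1.
  - by move=> a b ha; rewrite !hf ha gmul1l (homV hf) gmulVl.
move=> s [k [k0 /= ek]]; exact: (tors_all HP hf ef k0 ek).
Qed.
End Final.

Unset Implicit Arguments.
Theorem lemma6p1 (G : Grp) (g : nat -> seq bool -> G) :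
  @is_free_product_of_Pbar G g ->
  quotient_iso (@Tor G 1) G /\ TorLen_infinite G.
Proof.
move=> HP.
have [f [hf ef]] := f_exists HP.
have surj := f_surj HP hf ef.
have ker := f_ker HP hf ef.
split; first by exists f; split.
move=> n H.
have down : forall j, (forall x, @Tor G j.+2 x -> @Tor G j.+1 x) -> forall x, @Tor G j.+1 x -> @Tor G j x.
  move=> j hj x hx; have [z ez] := surj x; subst x.
  apply/(Tor_pull hf surj ker j z); apply: hj; exact/(Tor_pull hf surj ker j.+1 z).
have step : forall j, (forall x, @Tor G j.+1 x -> @Tor G j x) -> forall x, @Tor G 1 x -> @Tor G 0 x.
  elim=> [//|j IH] hj; apply: IH; exact: down.
have T10 := step n (fun x hx => proj2 (H x) (ex_intro _ n.+1 hx)).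
have t : @Tor G 1 (g 1 [::]).
  apply: (Tor1_tors (k := 3)) => //; exact: (g_leaf HP).
apply: (g_ne HP (n0 := 1) (eta0 := [::])); first by split.
exact: T10.
Qed.
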